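(* Let $n,m\in\mathbb{N}$, $f,g\in C[0,1]$ and let $\overline{B}_{n,m}$ be the composite Bernstein operator. Then for every $k\in\{1,\dots,m\}$ and $x\in\left[\frac{k-1}{m},\frac{k}{m}\right]$, $$ \left|\overline{B}_{n,m}(fg;x)-\overline{B}_{n,m}(f;x)\,\overline{B}_{n,m}(g;x)\right|\le\frac14\,\widetilde{\omega}\left(f;2\sqrt{\tfrac{(x-\frac{k-1}{m})(\frac km-x)}{n}}\right)\widetilde{\omega}\left(g;2\sqrt{\tfrac{(x-\frac{k-1}{m})(\frac km-x)}{n}}\right). $$
   Context: For $a<b$, $f:[a,b]\to\mathbb{R}$ and $n\in\mathbb{N}$, $B_n^{[a,b]}(f;x)=\frac{1}{(b-a)^n}\sum_{i=0}^n\binom{n}{i}(x-a)^i(b-x)^{n-i}f\left(a+i\frac{b-a}{n}\right)$. For $1\le k\le m$, $\overline{B}_{n,m}(f;x):=B_n^{[\frac{k-1}{m},\frac{k}{m}]}(f;x)$ for $x\in\left[\frac{k-1}{m},\frac{k}{m}\right]$. For $f\in C[0,1]$, $\omega(f;t)=\sup\{|f(x)-f(y)|:x,y\in[0,1],|x-y|\le t\}$ is the first-order modulus of continuity, and its least concave majorant is $\widetilde{\omega}(f;t)=\sup_{0\le x\le t\le y\le1,\,x\ne y}\frac{(t-x)\omega(f,y)+(y-t)\omega(f,x)}{y-x}$ for $0\le t\le1$, and $\widetilde{\omega}(f;t)=\omega(f,1)$ for $t>1$. *)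

(* Defs.v *)
From HB Require Import structures.
From mathcomp Require Import all_boot all_order all_algebra.
From mathcomp Require Import boolp classical_sets reals.
Set Implicit Arguments. Unset Strict Implicit. Unset Printing Implicit Defensive.
Import Order.TTheory GRing.Theory Num.Theory.
Local Open Scope ring_scope.
Local Open Scope classical_set_scope.

Section Defs.
Variable R : realType.

Definition bernstein_ab (a b : R) (n : nat) (f : R -> R) (x : R) : R :=
  (b - a)^-1 ^+ n *
  \sum_(i < n.+1) ('C(n, i)%:R * (x - a) ^+ i * (b - x) ^+ (n - i)
                    * f (a + i%:R * ((b - a) / n%:R))).

(* index k in {1..m} of the subinterval [(k-1)/m, k/m] containing x:
   k = max(1, ceil(m x)) *)
Definition cb_index (m : nat) (x : R) : nat :=
  maxn 1 `|Num.ceil (m%:R * x)|%N.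

Definition comp_bernstein (n m : nat) (f : R -> R) (x : R) : R :=
  let k := cb_index m x in
  bernstein_ab ((k%:R - 1) / m%:R) (k%:R / m%:R) n f x.

Definition omega (f : R -> R) (t : R) : R :=
  sup [set r | exists x y : R, [/\ 0 <= x <= 1, 0 <= y <= 1, `|x - y| <= t
                                & r = `|f x - f y|]].

(* least concave majorant of omega f *)
Definition omega_tilde (f : R -> R) (t : R) : R :=
  if t <= 1 then
    sup [set r | exists x y : R, 0 <= x <= t /\ t <= y <= 1 /\ x != y /\
          r = ((t - x) * omega f y + (y - t) * omega f x) / (y - x)]
  else omega f 1.

End Defs.

(* Main.v *)
Require Import Defs.
From HB Require Import structures.
From mathcomp Require Import all_boot all_order all_algebra.
From mathcomp Require Import all_classical all_reals all_analysis.
From mathcomp Require Import ring lra.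
Import numFieldNormedType.Exports.
Import Order.TTheory GRing.Theory Num.Theory.
Local Open Scope ring_scope.
Local Open Scope classical_set_scope.
Set Implicit Arguments. Unset Strict Implicit. Unset Printing Implicit Defensive.
Section Ex.
Variable R : realType.
Variable I : finType.
Variable p : I -> R.
Hypothesis p0 : forall i, 0 <= p i.
Hypothesis p1 : \sum_i p i = 1.

Definition Ex (X : I -> R) := \sum_i p i * X i.

Lemma ExD X Y : Ex (fun i => X i + Y i) = Ex X + Ex Y.
Proof. by rewrite /Ex -big_split /=; apply: eq_bigr => i _; rewrite mulrDr. Qed.

Lemma ExZ a X : Ex (fun i => a * X i) = a * Ex X.
Proof. by rewrite /Ex mulr_sumr; apply: eq_bigr => i _; rewrite mulrCA. Qed.

Lemma ExC c : Ex (fun _ => c) = c.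
Proof. by rewrite /Ex -mulr_suml p1 mul1r. Qed.

Lemma Ex_le X Y : (forall i, X i <= Y i) -> Ex X <= Ex Y.
Proof. by move=> h; apply: ler_sum => i _; apply: ler_wpM2l. Qed.

Lemma Ex_ext X Y : (forall i, X i = Y i) -> Ex X = Ex Y.
Proof. by move=> h; apply: eq_bigr => i _; rewrite h. Qed.

Definition Var X := Ex (fun i => X i ^+ 2) - Ex X ^+ 2.

Lemma Var_shift X c : Ex (fun i => (X i - c) ^+ 2) = Var X + (Ex X - c) ^+ 2.
Proof.
rewrite (@Ex_ext _ (fun i => X i ^+ 2 + ((-2 * c) * X i + c ^+ 2))); last first.
  by move=> i; ring.
by rewrite !ExD ExZ ExC /Var; ring.
Qed.

Lemma Var_ge0 X : 0 <= Var X.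
Proof.
have := Var_shift X (Ex X); rewrite subrr expr0n /= addr0 => <-.
rewrite /Ex; apply: sumr_ge0 => i _; apply: mulr_ge0 => //; exact: sqr_ge0.
Qed.

Lemma Var_le X c : Var X <= Ex (fun i => (X i - c) ^+ 2).
Proof. by rewrite Var_shift lerDl sqr_ge0. Qed.

Definition Cov X Y := Ex (fun i => X i * Y i) - Ex X * Ex Y.

Lemma Var_lin t X Y : Var (fun i => t * X i - Y i) = t^+2 * Var X - 2 * t * Cov X Y + Var Y.
Proof.
rewrite /Var (@Ex_ext _ (fun i => t^+2 * X i ^+ 2 + ((-2 * t) * (X i * Y i) + Y i ^+ 2))); last first.
  by move=> i; ring.
rewrite (@Ex_ext (fun i => t * X i - Y i) (fun i => t * X i + (-1) * Y i)); last first.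
  by move=> i; ring.
rewrite !ExD !ExZ /Cov; ring.
Qed.

Lemma Cov_sq X Y : Cov X Y ^+ 2 <= Var X * Var Y.
Proof.
set a := Var X; set b := Cov X Y; set c := Var Y.
have H t : 0 <= t^+2 * a - 2 * t * b + c by rewrite -Var_lin Var_ge0.
have a0 : 0 <= a by apply: Var_ge0.
have c0 : 0 <= c by apply: Var_ge0.
have [a_eq0|a_gt0] := eqVneq a 0.
  have [b0|bn0] := eqVneq b 0; first by rewrite b0 a_eq0 expr0n /= mul0r.
  have := H ((c + 1) / (2 * b)); rewrite a_eq0 mulr0 add0r.
  have -> : 2 * ((c + 1) / (2 * b)) * b = c + 1 by field; rewrite bn0.
  lra.
have ap : 0 < a by rewrite lt_def a_gt0 a0.
have := H (b / a).
have -> : (b / a) ^+ 2 * a - 2 * (b / a) * b + c = c - b^+2 / a by field; rewrite lt0r_neq0.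
rewrite subr_ge0 ler_pdivrMr // => h; by rewrite mulrC.
Qed.

End Ex.
Section Moments.
Variable R : realType.
Variables al be : R.

Definition Wt n (i : 'I_n.+1) : R := 'C(n, i)%:R * al ^+ i * be ^+ (n - i).
Arguments Wt : clear implicits.

Lemma S0 (n : nat) : \sum_i Wt n i = (al + be) ^+ n.
Proof.
rewrite addrC exprDn; apply: eq_bigr => i _.
by rewrite /Wt -mulr_natl mulrC; ring.
Qed.

Lemma shift k (phi : nat -> R) :
  \sum_(i < k.+2) (i%:R * Wt k.+1 i) * phi i =
  k.+1%:R * al * \sum_(j < k.+1) Wt k j * phi j.+1.
Proof.
rewrite big_ord_recl /= mul0r mul0r add0r mulr_sumr; apply: eq_bigr => j _.
rewrite /Wt /= subSS exprS.
have e : (k.+1 * 'C(k, j) = j.+1 * 'C(k.+1, j.+1))%N by rewrite -mul_bin_diag.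
have e' : (k.+1%:R * 'C(k, j)%:R = j.+1%:R * 'C(k.+1, j.+1)%:R :> R) by rewrite -!natrM e.
rewrite /bump /= add1n.
transitivity ((j.+1%:R * 'C(k.+1, j.+1)%:R) * al * al ^+ j * be ^+ (k - j) * phi j.+1); first by ring.
by rewrite -e'; ring.
Qed.

Lemma S1 (n : nat) : (al + be) * \sum_(i < n.+1) (i%:R * Wt n i) = n%:R * al * (al + be) ^+ n.
Proof.
case: n => [|k]; first by rewrite big_ord_recl big_ord0 /= !mul0r addr0 mulr0.
have := shift k (fun _ => 1); under eq_bigr do rewrite mulr1.
move=> ->; under eq_bigr do rewrite mulr1.
by rewrite S0 exprS; ring.
Qed.

Lemma S1' k : \sum_(i < k.+2) (i%:R * Wt k.+1 i) = k.+1%:R * al * (al + be) ^+ k.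
Proof.
have := shift k (fun _ => 1); under eq_bigr do rewrite mulr1.
by move=> ->; under eq_bigr do rewrite mulr1; rewrite S0.
Qed.

Lemma S2 k : \sum_(i < k.+2) (i%:R ^+ 2 * Wt k.+1 i) =
  k.+1%:R * al * (\sum_(j < k.+1) (j%:R * Wt k j) + (al + be) ^+ k).
Proof.
have := shift k (fun i => i%:R).
have -> : \sum_(i < k.+2) (i%:R * Wt k.+1 i) * i%:R = \sum_(i < k.+2) (i%:R ^+ 2 * Wt k.+1 i).
  by apply: eq_bigr => i _; ring.
move=> ->; congr (_ * _).
rewrite -S0 -big_split /=; apply: eq_bigr => j _; rewrite -addn1 natrD; ring.
Qed.

End Moments.
Arguments Wt {R} al be n i.
Section Bern.
Variable R : realType.
Variables (a b x : R) (n : nat).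
Hypothesis ab : a < b.
Hypothesis hx : a <= x <= b.
Hypothesis n0 : (0 < n)%N.

Definition pw (i : 'I_n.+1) : R := (b - a)^-1 ^+ n * Wt (x - a) (b - x) n i.
Definition un (i : 'I_n.+1) : R := a + i%:R * ((b - a) / n%:R).

Lemma bern_Ex f : bernstein_ab a b n f x = Ex pw (fun i => f (un i)).
Proof.
rewrite /bernstein_ab /Ex mulr_sumr; apply: eq_bigr => i _.
by rewrite /pw /un /Wt !mulrA.
Qed.

Lemma pw0 i : 0 <= pw i.
Proof.
have /andP[h1 h2] := hx.
rewrite /pw /Wt; apply: mulr_ge0; first by apply: exprn_ge0; rewrite invr_ge0 subr_ge0 ltW.
apply: mulr_ge0; [apply: mulr_ge0 => //|]; apply: exprn_ge0; by rewrite subr_ge0.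
Qed.

Lemma pw1 : \sum_i pw i = 1.
Proof.
rewrite /pw -mulr_sumr S0 (_ : x - a + (b - x) = b - a); last by ring.
rewrite -exprMn mulVf ?expr1n //; by rewrite subr_eq0 gt_eqF.
Qed.

Lemma un01 i : a <= un i <= b.
Proof.
have ha : 0 < b - a by rewrite subr_gt0.
have hn : 0 < n%:R :> R by rewrite ltr0n.
have hi : (i%:R : R) <= n%:R by rewrite ler_nat -ltnS.
rewrite /un; apply/andP; split.
  by rewrite lerDl; apply: mulr_ge0; [apply: ler0n|apply: divr_ge0; [apply: ltW|apply: ltW]].
rewrite -lerBrDl mulrA ler_pdivrMr //; nra.
Qed.

End Bern.
Arguments pw {R} a b x n i.
Arguments un {R} a b n i.


Lemma pw_var (R : realType) (a b x : R) k : a < b ->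
  Ex (pw a b x k.+1) (fun i => (un a b k.+1 i - x) ^+ 2) = (x - a) * (b - x) / k.+1%:R.
Proof.
move=> ab.
set al := x - a; set be := b - x.
have hab : al + be = b - a by rewrite /al /be; ring.
have hne : b - a != 0 by rewrite subr_eq0 gt_eqF.
have kne : k.+1%:R != 0 :> R by rewrite pnatr_eq0.
rewrite /Ex /pw.
under eq_bigr do rewrite -mulrA.
rewrite -mulr_sumr.
have -> : \sum_(i < k.+2) Wt al be k.+1 i * (un a b k.+1 i - x) ^+ 2 =
   ((b - a) / k.+1%:R) ^+ 2 * \sum_(i < k.+2) (i%:R ^+ 2 * Wt al be k.+1 i)
   - 2 * ((b - a) / k.+1%:R) * al * \sum_(i < k.+2) (i%:R * Wt al be k.+1 i)
   + al ^+ 2 * \sum_(i < k.+2) Wt al be k.+1 i.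
  rewrite !mulr_sumr -!sumrB -big_split /=; apply: eq_bigr => i _.
  rewrite /un /al; ring.
rewrite S2 S1' S0 hab.
have eT := S1 al be k; rewrite hab in eT.
set T := \sum_(i < k.+1) _ in eT *.
have -> : ((b - a) / k.+1%:R) ^+ 2 * (k.+1%:R * al * (T + (b - a) ^+ k))
   = (b - a) * al * ((b - a) * T) / k.+1%:R + (b - a) ^+ 2 * al * (b - a) ^+ k / k.+1%:R.
  by field.
rewrite eT.
have -> : b - a = al + be by rewrite hab.
have hne' : al + be != 0 by rewrite hab.
have Hne : (al + be) ^+ k != 0 by rewrite expf_neq0.
rewrite exprVn !exprS; set H := (al + be) ^+ k.
rewrite -natr1 in kne *.
field.
by rewrite kne Hne hne'.
Qed.

Section VarBound.
Variable R : realType.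

Lemma var_bound (I : finType) (p u F : I -> R) (A s c0 : R) :
  (forall i, 0 <= p i) -> \sum_i p i = 1 -> 0 <= A -> 0 <= s ->
  (forall i j, `|F i - F j| <= A + s * `|u i - u j|) ->
  Var p F <= (A / 2 + s * Num.sqrt (Ex p (fun i => (u i - c0) ^+ 2))) ^+ 2.
Proof.
move=> p0 p1 A0 s0 HF.
have [i0 _] : exists i0 : I, true.
  case: (pickP (@predT I)) => [i0 _|h]; first by exists i0.
  by move: p1; rewrite big_pred0 // => /eqP; rewrite eq_sym oner_eq0.
pose d i := `|u i - c0|.
pose L := \big[Order.max/F i0 - s * d i0]_i (F i - s * d i).
pose U := \big[Order.min/F i0 + s * d i0]_i (F i + s * d i).
have Ld i : F i - s * d i <= L by apply: le_bigmax.
have Ud i : U <= F i + s * d i by apply: bigmin_le.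
have tri i j : `|u i - u j| <= d i + d j.
  rewrite /d (_ : u i - u j = (u i - c0) - (u j - c0)); last by ring.
  by rewrite (le_trans (ler_normB _ _)).
have sd0 i : 0 <= s * d i by apply: mulr_ge0 => //; apply: normr_ge0.
have key i j : F i - s * d i <= F j + s * d j + A.
  have h1 := HF i j; have h2 := tri i j; have h3 := ler_norm (F i - F j).
  have h4 := ler_wpM2l s0 h2; lra.
have LU : L <= U + A.
  apply: bigmax_le => [|i _].
    rewrite -lerBlDr; apply: le_bigmin => [|j _]; rewrite lerBlDr; exact: key.
  rewrite -lerBlDr; apply: le_bigmin => [|j _]; rewrite lerBlDr; exact: key.
pose c := (L + U) / 2.
have Hc i : (F i - c) ^+ 2 <= (A / 2 + s * d i) ^+ 2.
  have d0 : 0 <= d i by apply: normr_ge0.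
  have h1 := Ld i; have h2 := Ud i; have h3 := sd0 i; rewrite /c.
  have e1 : 0 <= A / 2 + s * d i - (F i - (L + U) / 2) by lra.
  have e2 : 0 <= A / 2 + s * d i + (F i - (L + U) / 2) by lra.
  have := mulr_ge0 e1 e2; rewrite -subr_ge0; set z := F i - _; lra.
apply: (le_trans (Var_le p1 F c)).
apply: (le_trans (Ex_le p0 Hc)).
set S := Ex p (fun i => (u i - c0) ^+ 2).
have dS : Ex p (fun i => d i ^+ 2) = S by apply: Ex_ext => i; rewrite /d real_normK // num_real.
have S0 : 0 <= S by rewrite /S /Ex; apply: sumr_ge0 => i _; apply: mulr_ge0 => //; apply: sqr_ge0.
have m1 : Ex p d <= Num.sqrt S.
  have := Var_ge0 p0 p1 d; rewrite /Var dS subr_ge0 => h.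
  apply: le_trans (ler_norm _) _; rewrite -sqrtr_sqr; exact: ler_wsqrtr.
rewrite (@Ex_ext _ _ p _ (fun i => A^+2/4 + ((A * s) * d i + s^+2 * d i ^+ 2))); last by move=> i; field.
rewrite !ExD !ExZ !ExC // dS.
have sq := sqr_sqrtr S0.
have As0 : 0 <= A * s by apply: mulr_ge0.
have := ler_wpM2l As0 m1.
set r := Num.sqrt S; move: sq; rewrite -/r => sq h.
rewrite (_ : (A / 2 + s * r) ^+ 2 = A^+2/4 + (A * s * r + s^+2 * r^+2)); last by field.
rewrite sq; lra.
Qed.

End VarBound.
Section Slope.
Variable R : realType.

Lemma slope (I : finType) (w : R -> R) (M dl : R) (D : I -> R) :
  0 <= dl -> 0 <= M -> 0 <= w 0 ->
  (forall x, 0 <= x <= dl -> w x <= M) ->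
  (forall x y, 0 <= x < dl -> dl < y -> y <= 1 ->
      (dl - x) * w y + (y - dl) * w x <= M * (y - x)) ->
  (forall i, 0 <= D i <= 1) ->
  exists s, [/\ 0 <= s, s * dl <= M & forall i, w (D i) <= M - s * dl + s * D i].
Proof.
move=> dl0 M0 w00 Hle Hch HD.
pose T i := if dl < D i then Order.max 0 ((w (D i) - M) / (D i - dl)) else 0.
pose s := \big[Order.max/0]_i T i.
pose P (t : R) := 0 <= t /\ forall x, 0 <= x < dl -> w x <= M + t * (x - dl).
have Ps : P s.
  apply: (big_ind P).
  - split => // x /andP[x0 xd]; rewrite mul0r addr0; apply: Hle; rewrite x0; exact: ltW.
  - move=> a b Pa Pb; case: (leP a b) => _; [exact: Pb | exact: Pa].
  - move=> i _; rewrite /P /T; case: ifP => Hi.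
      case: (leP 0 ((w (D i) - M) / (D i - dl))) => hr; last first.
        split => // x /andP[x0 xd]; rewrite mul0r addr0; apply: Hle; rewrite x0; exact: ltW.
      split => // x /andP[x0 xd].
      have yd : 0 < D i - dl by rewrite subr_gt0.
      have xx : 0 <= x < dl by rewrite x0 xd.
      have := Hch x (D i) xx Hi (proj2 (andP (HD i))).
      set y := D i; set r := (w y - M) / (y - dl).
      have -> : w y = M + r * (y - dl) by rewrite /r divfK ?lt0r_neq0 //; ring.
      move=> h.
      rewrite -(ler_pM2l yd) -/y.
      have -> : (y - dl) * (M + r * (x - dl)) = M * (y - x) - (dl - x) * (M + r * (y - dl)) by ring.
      lra.
    split => // x /andP[x0 xd]; rewrite mul0r addr0; apply: Hle; rewrite x0; exact: ltW.
case: Ps => s0 Hs.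
exists s; split => //.
  have [dlp|] := ltP 0 dl.
    have := Hs 0; rewrite lexx dlp => /(_ isT); lra.
  move=> d0; have -> : dl = 0 by apply: le_anti; rewrite d0 dl0.
  by rewrite mulr0.
move=> i; have /andP[Di0 Di1] := HD i.
case: (ltgtP dl (D i)) => hi.
- have : T i <= s by apply: le_bigmax.
  rewrite /T hi => h.
  have yd : 0 < D i - dl by rewrite subr_gt0.
  have h2 : (w (D i) - M) / (D i - dl) <= s by apply: le_trans h; rewrite le_max lexx orbT.
  move: h2; rewrite ler_pdivrMr // => h2; nra.
- have := Hs (D i); rewrite Di0 hi => /(_ isT); lra.
- rewrite -hi; have := Hle dl; rewrite dl0 lexx => /(_ isT); lra.
Qed.

End Slope.
Section Omega.
Variable R : realType.
Variable f : R -> R.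
Hypothesis cf : {within `[0, 1], continuous f}.

Lemma f_osc : exists K, forall x y : R, 0 <= x <= 1 -> 0 <= y <= 1 -> `|f x - f y| <= K.
Proof.
have [c1 _ h1] := EVT_max ler01 cf.
have [c2 _ h2] := EVT_min ler01 cf.
exists (f c1 - f c2) => x y hx hy.
have ix : x \in `[0, 1]%R by rewrite in_itv /=.
have iy : y \in `[0, 1]%R by rewrite in_itv /=.
have := h1 _ ix; have := h1 _ iy; have := h2 _ ix; have := h2 _ iy.
rewrite ler_norml; move=> *; apply/andP; split; lra.
Qed.

Definition OS (t : R) := [set r | exists x y : R, [/\ 0 <= x <= 1, 0 <= y <= 1, `|x - y| <= t
                                & r = `|f x - f y|]].

Lemma omegaE t : omega f t = sup (OS t). Proof. by []. Qed.

Lemma OS_ub : exists K, forall t, ubound (OS t) K.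
Proof.
have [K hK] := f_osc; exists K => t r [x [y [hx hy _ ->]]]; exact: hK.
Qed.

Lemma OS_n0 t : 0 <= t -> OS t !=set0.
Proof.
move=> t0; exists 0, 0, 0; split; rewrite ?lexx ?ler01 ?subrr ?normr0 //.
Qed.

Lemma omega_ge0 t : 0 <= t -> 0 <= omega f t.
Proof.
move=> t0; have [K hK] := OS_ub.
apply: (ub_le_sup (ex_intro _ K (hK t))).
exists 0, 0; split; rewrite ?lexx ?ler01 ?subrr ?normr0 //.
Qed.

Lemma omega_sup x y t : 0 <= x <= 1 -> 0 <= y <= 1 -> `|x - y| <= t ->
  `|f x - f y| <= omega f t.
Proof.
move=> hx hy hxy; have [K hK] := OS_ub.
apply: (ub_le_sup (ex_intro _ K (hK t))); exists x, y; split => //.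
Qed.

Lemma omega_mono t1 t2 : 0 <= t1 <= t2 -> omega f t1 <= omega f t2.
Proof.
move=> /andP[t10 t12]; apply: ge_sup; first exact: OS_n0.
move=> r [x [y [hx hy hxy ->]]]; apply: omega_sup => //; exact: le_trans t12.
Qed.

Lemma omega_le_K : exists K, forall t, 0 <= t -> omega f t <= K.
Proof.
have [K hK] := OS_ub; exists K => t t0; apply: ge_sup; [exact: OS_n0 | exact: hK].
Qed.

Lemma chord_le dl x y : dl <= 1 -> 0 <= x <= dl -> dl <= y <= 1 -> x != y ->
  ((dl - x) * omega f y + (y - dl) * omega f x) / (y - x) <= omega_tilde f dl.
Proof.
move=> dl1 hx hy xy; rewrite /omega_tilde dl1.
have [K hK] := omega_le_K.
move: hx hy => /andP[x0 xd] /andP[dy y1].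
apply: ub_le_sup; last by exists x, y; split => //; rewrite ?x0 ?(le_trans xd) ?dy ?y1.
exists K => r [x' [y' [/andP[x0' xd'] [/andP[dy' y1'] [xy' ->]]]]].
have y0' : 0 <= y' by apply: le_trans dy'; apply: le_trans xd'.
have yx : 0 < y' - x'.
  rewrite subr_gt0 lt_neqAle xy' andTb; exact: le_trans dy'.
rewrite ler_pdivrMr //.
have := hK x' x0'; have := hK y' y0'.
have a0 : 0 <= dl - x' by rewrite subr_ge0.
have b0 : 0 <= y' - dl by rewrite subr_ge0.
move=> h1 h2; have := ler_wpM2l a0 h1; have := ler_wpM2l b0 h2; lra.
Qed.

End Omega.

Section Main.
Variable R : realType.

Lemma var_omega (I : finType) (p u : I -> R) (phi : R -> R) (c0 dl : R) :
  {within `[0, 1], continuous phi} ->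
  (forall i, 0 <= p i) -> \sum_i p i = 1 -> (forall i, 0 <= u i <= 1) ->
  0 <= dl <= 1 -> 2 * Num.sqrt (Ex p (fun i => (u i - c0) ^+ 2)) = dl ->
  0 <= omega_tilde phi dl /\ Var p (fun i => phi (u i)) <= (omega_tilde phi dl / 2) ^+ 2.
Proof.
move=> cf p0 p1 u01 /andP[dl0 dl1] hdl.
set M := omega_tilde phi dl.
have M0 : 0 <= M.
  apply: le_trans (chord_le cf (x:=0) (y:=1) dl1 _ _ _); last by rewrite eq_sym oner_neq0.
  - rewrite !subr0 invr1 mulr1; apply: addr_ge0; apply: mulr_ge0;
      rewrite ?subr_ge0 //; apply: omega_ge0 => //.
  - by rewrite lexx dl0.
  - by rewrite dl1 lexx.
have wdl : omega phi dl <= M.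
  have [dl1'|dle] := ltP dl 1.
    apply: le_trans (chord_le cf (x:=dl) (y:=1) dl1 _ _ _); last by rewrite lt_eqF.
    - rewrite subrr mul0r add0r [_ * omega _ _]mulrC mulfK // subr_eq0 gt_eqF //.
    - by rewrite lexx dl0.
    - by rewrite lexx ltW.
  have e : dl = 1 by apply: le_anti; rewrite dl1 dle.
  apply: le_trans (chord_le cf (x:=0) (y:=1) dl1 _ _ _); last by rewrite eq_sym oner_neq0.
  - by rewrite e subr0 subrr mul0r addr0 invr1 mulr1 mul1r.
  - by rewrite lexx dl0.
  - by rewrite dl1 lexx.
pose D (ij : I * I) := `|u ij.1 - u ij.2|.
have D01 ij : 0 <= D ij <= 1.
  rewrite /D normr_ge0 /= ler_norml.
  have := u01 ij.1; have := u01 ij.2; move=> /andP[? ?] /andP[? ?].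
  apply/andP; split; lra.
have Hch : forall x y, 0 <= x < dl -> dl < y -> y <= 1 ->
    (dl - x) * omega phi y + (y - dl) * omega phi x <= M * (y - x).
  move=> x y hx hyd hy1.
  have hyx : 0 < y - x by move: hx => /andP[_ ?]; lra.
  have := chord_le cf (x:=x) (y:=y) dl1 _ _ _.
  rewrite ler_pdivrMr //; apply.
  - by move: hx => /andP[? ?]; apply/andP; split => //; apply: ltW.
  - by rewrite ltW.
  - by rewrite lt_eqF // -subr_gt0.
have [s [s0 sdl Hs]] := @slope _ _ (omega phi) M dl D dl0 M0 (omega_ge0 cf (lexx 0))
  (fun x hx => le_trans (omega_mono cf hx) wdl) Hch D01.
have A0 : 0 <= M - s * dl by rewrite subr_ge0.
have HF : forall i j, `|phi (u i) - phi (u j)| <= M - s * dl + s * `|u i - u j|.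
  move=> i j; apply: le_trans (Hs (i, j)).
  by apply: omega_sup => //; rewrite /D /=.
have := @var_bound _ _ p u (fun i => phi (u i)) (M - s * dl) s c0 p0 p1 A0 s0 HF.
have sq : Num.sqrt (Ex p (fun i => (u i - c0) ^+ 2)) = dl / 2 by rewrite -hdl; field.
rewrite sq => h.
split => //; apply: le_trans h _.
by rewrite (_ : (M - s * dl) / 2 + s * (dl / 2) = M / 2); last by field.
Qed.

Lemma interval_bound (n m : nat) (f g : R -> R) (j : nat) (x : R) :
  (0 < n)%N -> (0 < m)%N ->
  {within `[0, 1], continuous f} -> {within `[0, 1], continuous g} ->
  (1 <= j <= m)%N ->
  (j%:R - 1) / m%:R <= x <= j%:R / m%:R ->
  `|bernstein_ab ((j%:R - 1) / m%:R) (j%:R / m%:R) n (fun t => f t * g t) x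
    - bernstein_ab ((j%:R - 1) / m%:R) (j%:R / m%:R) n f x
      * bernstein_ab ((j%:R - 1) / m%:R) (j%:R / m%:R) n g x|
  <= 4^-1 *
     omega_tilde f (2 * Num.sqrt ((x - (j%:R - 1) / m%:R) * (j%:R / m%:R - x) / n%:R))
   * omega_tilde g (2 * Num.sqrt ((x - (j%:R - 1) / m%:R) * (j%:R / m%:R - x) / n%:R)).
Proof.
case: n => [//|k] _ m0 cf cg /andP[j1 jm].
set a := (j%:R - 1) / m%:R; set b := j%:R / m%:R => hx.
have mp : 0 < m%:R :> R by rewrite ltr0n.
have mge1 : 1 <= m%:R :> R by rewrite ler1n.
have jge1 : 1 <= j%:R :> R by rewrite ler1n.
have jlem : j%:R <= m%:R :> R by rewrite ler_nat.
have hba : b - a = 1 / m%:R by rewrite /a /b; field; rewrite gt_eqF.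
have ab : a < b by rewrite -subr_gt0 hba divr_gt0.
have a0 : 0 <= a by rewrite /a divr_ge0 ?subr_ge0 // ltW.
have b1 : b <= 1 by rewrite /b ler_pdivrMr // mul1r.
have ba1 : b - a <= 1 by rewrite hba ler_pdivrMr // mul1r.
have u01 : forall i, 0 <= un a b k.+1 i <= 1.
  move=> i; have /andP[h1 h2] := un01 ab (isT : (0 < k.+1)%N) i.
  by rewrite (le_trans a0 h1) (le_trans h2 b1).
set z := (x - a) * (b - x) / k.+1%:R.
set dl := 2 * Num.sqrt z.
have hdl : 2 * Num.sqrt (Ex (pw a b x k.+1) (fun i => (un a b k.+1 i - x) ^+ 2)) = dl.
  by rewrite pw_var.
have hx' := hx; move/andP: hx' => [xa xb].
have z0 : 0 <= z.
  by rewrite /z divr_ge0 ?ler0n // mulr_ge0 // subr_ge0.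
have z14 : z <= 4^-1.
  have k1 : 1 <= k.+1%:R :> R by rewrite ler1n.
  have zle : z <= (x - a) * (b - x).
    rewrite /z ler_pdivrMr ?ltr0n //; apply: ler_peMr => //.
    by rewrite mulr_ge0 // subr_ge0.
  apply: le_trans zle _.
  have : (x - a) * (b - x) <= (b - a) ^+ 2 / 4.
    rewrite ler_pdivlMr; last by [].
    have := sqr_ge0 ((x - a) - (b - x)); rewrite !expr2; nra.
  move=> h; apply: le_trans h _.
  rewrite ler_pdivrMr // mulVf //.
  have : 0 <= b - a by rewrite subr_ge0 ltW.
  move=> h; rewrite expr2; nra.
have dl01 : 0 <= dl <= 1.
  have r0 := sqrtr_ge0 z; have r2 := sqr_sqrtr z0.
  rewrite /dl; move: r0 r2; set r := Num.sqrt z => r0 r2.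
  apply/andP; split; first by rewrite mulr_ge0.
  nra.
have [Mf0 Vf] := var_omega cf (pw0 (n:=k.+1) ab hx) (pw1 x k.+1 ab) u01 dl01 hdl.
have [Mg0 Vg] := var_omega cg (pw0 (n:=k.+1) ab hx) (pw1 x k.+1 ab) u01 dl01 hdl.
rewrite !bern_Ex /=.
have := Cov_sq (pw0 (n:=k.+1) ab hx) (pw1 x k.+1 ab)
          (fun i => f (un a b k.+1 i)) (fun i => g (un a b k.+1 i)).
rewrite /Cov.
set C := _ - _.
set Mf := omega_tilde f dl; set Mg := omega_tilde g dl.
have V1 := Var_ge0 (pw0 (n:=k.+1) ab hx) (pw1 x k.+1 ab) (fun i => f (un a b k.+1 i)).
have V2 := Var_ge0 (pw0 (n:=k.+1) ab hx) (pw1 x k.+1 ab) (fun i => g (un a b k.+1 i)).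
move=> hC.
have hC2 : C ^+ 2 <= (4^-1 * Mf * Mg) ^+ 2.
  apply: le_trans hC _.
  rewrite (_ : (4^-1 * Mf * Mg) ^+ 2 = (Mf / 2) ^+ 2 * (Mg / 2) ^+ 2); last by field.
  apply: ler_pM => //.
have P0 : 0 <= 4^-1 * Mf * Mg by rewrite mulr_ge0 // mulr_ge0.
rewrite -(ler_pXn2r (isT : (0 < 2)%N)) ?nnegrE ?normr_ge0 //.
by rewrite real_normK // num_real.
Qed.
End Main.

Lemma cb_cases (R : realType) (m k : nat) (x : R) : (0 < m)%N -> (1 <= k <= m)%N ->
  (k%:R - 1) / m%:R <= x <= k%:R / m%:R ->
  cb_index m x = k \/ (cb_index m x = k.-1 /\ (1 < k)%N /\ x = (k%:R - 1) / m%:R).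
Proof.
move=> m0 /andP[k1 km] /andP[h1 h2].
have mp : 0 < m%:R :> R by rewrite ltr0n.
have l1 : k%:R - 1 <= m%:R * x by rewrite mulrC -ler_pdivrMr.
have l2 : m%:R * x <= k%:R by rewrite mulrC -ler_pdivlMr.
rewrite /cb_index.
have c1 : Num.ceil (m%:R * x) <= k%:Z.
  by rewrite ceil_le_int /=; rewrite (_ : (k%:Z)%:~R = k%:R :> R) // .
have c2 : (k%:Z - 1) <= Num.ceil (m%:R * x).
  have := ceil_ge (m%:R * x) => h.
  have : ((k%:Z - 1)%:~R : R) <= (Num.ceil (m%:R * x))%:~R.
    by rewrite intrB /= (le_trans _ h) // (_ : (k%:Z)%:~R = k%:R :> R).
  by rewrite ler_int.
have [e|ne] := eqVneq (Num.ceil (m%:R * x)) k%:Z.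
  by left; rewrite e; apply/maxn_idPr.
have e : Num.ceil (m%:R * x) = k%:Z - 1.
  apply: le_anti; rewrite c2 andbT.
  by rewrite -ltzD1 subrK lt_neqAle ne c1.
case: k k1 km l1 l2 c1 c2 ne e h1 h2 => [//|k'] _ km l1 l2 c1 c2 ne e h1 h2.
have ek : (k'.+1%:Z - 1) = k'%:Z by rewrite -addn1 PoszD addrK.
rewrite e ek.
case: k' km l1 l2 c1 c2 ne e h1 h2 ek => [|k''] km l1 l2 c1 c2 ne e h1 h2 ek; first by left.
right; split; first by apply/maxn_idPr.
split => //.
have : m%:R * x <= k''.+1%:R.
  have := ceil_ge (m%:R * x); rewrite e ek => h.
  by rewrite (le_trans h).
move=> h3.
apply: le_anti; rewrite h1 andbT.
rewrite ler_pdivlMr // mulrC (le_trans h3) //.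
by rewrite -[k''.+2]addn1 natrD addrK.
Qed.

Unset Implicit Arguments.
Theorem mainTheorem3 (R : realType) (n m : nat) (f g : R -> R) :
  (0 < n)%N -> (0 < m)%N ->
  {within `[0, 1], continuous f} -> {within `[0, 1], continuous g} ->
  forall (k : nat) (x : R), (1 <= k <= m)%N ->
    (k%:R - 1) / m%:R <= x <= k%:R / m%:R ->
    `|comp_bernstein n m (fun t => f t * g t) x
      - comp_bernstein n m f x * comp_bernstein n m g x|
    <= 4^-1 *
       omega_tilde f (2 * Num.sqrt ((x - (k%:R - 1) / m%:R) * (k%:R / m%:R - x) / n%:R))
     * omega_tilde g (2 * Num.sqrt ((x - (k%:R - 1) / m%:R) * (k%:R / m%:R - x) / n%:R)).
Proof.
move=> n0 m0 cf cg k x hk hx.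
rewrite /comp_bernstein.
have [e|[e [k1 ex]]] := cb_cases m0 hk hx.
  by rewrite e; apply: interval_bound.
rewrite e.
have hk' : (1 <= k.-1 <= m)%N.
  by case: k hk k1 {e ex hx} => [//|k'] /andP[_ km] k1 /=; rewrite -ltnS k1 ltnW.
have ekm : (k.-1)%:R = k%:R - 1 :> R.
  by case: k hk k1 {e ex hx hk'} => [//|k'] _ _; rewrite -natr1 addrK.
have hx' : ((k.-1)%:R - 1) / m%:R <= x <= (k.-1)%:R / m%:R.
  rewrite ekm ex lexx andbT ler_pM2r ?invr_gt0 ?ltr0n // lerBlDr lerDl //.
have := interval_bound n0 m0 cf cg hk' hx'.
rewrite ekm -ex !subrr mulr0 mul0r.
by rewrite !mul0r.
Qed.
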